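(* Let $\mathbf{X}\subseteq\mathbb{N}^n$ be any set. Then $\mathbf{X}$ is hybridlinear if and only if $(\mathbf{X},\le_{\mathbf{P}_{\mathbf{X}}})$ is a well-quasi-order.
   Context: Hybridlinear: $\mathbf{X}=\mathbf{B}+\mathbb{N}(\mathbf{F})$ with $\mathbf{B},\mathbf{F}\subseteq\mathbb{N}^n$ finite (the empty set counts as hybridlinear). A vector $\mathbf{p}\in\mathbb{Z}^n$ is a preservant of $\mathbf{X}$ if $\mathbf{X}+\mathbf{p}\subseteq\mathbf{X}$; $\mathbf{P}_{\mathbf{X}}$ is the set of preservants. For an $\mathbb{N}$-generated set $\mathbf{P}$, $\mathbf{x}\le_{\mathbf{P}}\mathbf{y}$ iff $\mathbf{y}=\mathbf{x}+\mathbf{p}$ for some $\mathbf{p}\in\mathbf{P}$. A partial order is a well-quasi-order if it is well-founded and every subset has finitely many minimal elements. *)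

(* Defs.v *)
From mathcomp Require Import all_boot all_order all_algebra.
Set Implicit Arguments. Unset Strict Implicit. Unset Printing Implicit Defensive.
Import GRing.Theory Num.Theory.

Definition natvec (n : nat) := {ffun 'I_n -> nat}.
Definition intvec (n : nat) := {ffun 'I_n -> int}.

Definition natset (n : nat) := natvec n -> Prop.

(* x \in B + N(F): x = b + sum_j c_j f_j with b in B, c_j in N. *)
Definition in_hybrid (n : nat) (B F : seq (natvec n)) (x : natvec n) : Prop :=
  exists2 b, b \in B &
    exists c : 'I_(size F) -> nat,
      forall i : 'I_n, x i = (b i + \sum_(j < size F) c j * (nth b F j) i)%N.

(* X is hybridlinear: X = B + N(F) for finite B, F (B = [::] gives the empty set). *)
Definition hybridlinear (n : nat) (X : natset n) : Prop :=
  exists B F : seq (natvec n), forall x, X x <-> in_hybrid B F x.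

Definition shift_by (n : nat) (x : natvec n) (p : intvec n) (y : natvec n) : Prop :=
  forall i : 'I_n, ((y i)%:Z = (x i)%:Z + p i)%R.

Definition preservant (n : nat) (X : natset n) (p : intvec n) : Prop :=
  forall x, X x -> exists y, shift_by x p y /\ X y.

Definition le_by (n : nat) (P : intvec n -> Prop) (x y : natvec n) : Prop :=
  exists p, P p /\ shift_by x p y.

Definition wqo_on (T : eqType) (X : T -> Prop) (le : T -> T -> Prop) : Prop :=
  [/\ (forall x, X x -> le x x),
      (forall x y z, X x -> X y -> X z -> le x y -> le y z -> le x z),
      (forall x y, X x -> X y -> le x y -> le y x -> x = y),
      well_founded (fun a b => [/\ X a, X b, le a b & a <> b]) &
      (forall S : T -> Prop, (forall s, S s -> X s) ->
         exists l : seq T, forall m, S m ->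
           (forall s, S s -> le s m -> s = m) -> m \in l)].

(* Main.v *)
Require Import Defs.
From mathcomp Require Import all_boot all_order all_algebra.
From mathcomp Require Import zify ring lra.
From Stdlib Require Import Classical ClassicalEpsilon.
Set Implicit Arguments. Unset Strict Implicit. Unset Printing Implicit Defensive.
Import GRing.Theory Num.Theory.

Section Aux.
Variable n : nat.
Implicit Types (X : natset n) (x y : natvec n) (p : intvec n).

Lemma shift_uniq x p y z : shift_by x p y -> shift_by x p z -> y = z.
Proof. move=> Hy Hz; apply/ffunP=> i; have := Hy i; rewrite -Hz. move=> H. Fail lia. by case: H. Qed.

Lemma pres_iter X p x : preservant X p -> X x -> forall k : nat,
  exists y, X y /\ forall i, ((y i)%:Z = (x i)%:Z + p i *+ k)%R.
Proof.
move=> Hp Hx; elim=> [|k [y [Xy Hy]]].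
  by exists x; split=> // i; rewrite mulr0n addr0.
have [z [Hz Xz]] := Hp y Xy. exists z; split=> // i.
by rewrite Hz Hy mulrSr addrA.
Qed.

Lemma pres_nonneg X p x : preservant X p -> X x -> forall i, (0 <= p i)%R.
Proof.
move=> Hp Hx i; rewrite Order.TotalTheory.leNgt; apply/negP=> Hneg.
have [y [_ Hy]] := pres_iter Hp Hx (x i).+1.
have := Hy i; rewrite -mulr_natr. nia.
Qed.

Definition toint (q : natvec n) : intvec n := [ffun i => ((q i)%:Z)%R].
Definition addv (x q : natvec n) : natvec n := [ffun i => (x i + q i)%N].
Definition tonat (p : intvec n) : natvec n := [ffun i => `|p i|%N].

Lemma shift_addv x q : shift_by x (toint q) (addv x q).
Proof. by move=> i; rewrite !ffunE. Qed.

Lemma pres_addv X q x : preservant X (toint q) -> X x -> X (addv x q).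
Proof.
move=> Hp Hx; have [y [Hy Xy]] := Hp x Hx.
by rewrite (shift_uniq (shift_addv x q) Hy).
Qed.

Lemma tonatK p : (forall i, (0 <= p i)%R) -> toint (tonat p) = p.
Proof. move=> H; apply/ffunP=> i; rewrite !ffunE; exact: gez0_abs. Qed.



Lemma le_pointwise X x y : X x -> le_by (preservant X) x y -> forall i, x i <= y i.
Proof.
move=> Hx [p [Hp Hs]] i; have := pres_nonneg Hp Hx i; have := Hs i; lia.
Qed.

Lemma sum_lt x y : (forall i, x i <= y i) -> x <> y ->
  \sum_i x i < \sum_i y i.
Proof.
move=> H Hne.
have [i Hi] : exists i, x i != y i.
  apply: NNPP=> Hn; apply: Hne; apply/ffunP=> i.
  by apply/eqP; apply: NNPP=> /negP Hi; apply: Hn; exists i.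
rewrite (bigD1 i) //= [X in _ < X](bigD1 i) //=.
rewrite -addSn; apply: leq_add; first by rewrite ltn_neqAle Hi H.
by apply: leq_sum.
Qed.

Lemma le_refl X x : le_by (preservant X) x x.
Proof.
exists 0%R; split; last by move=> i; rewrite ffunE addr0.
by move=> y Hy; exists y; split=> // i; rewrite ffunE addr0.
Qed.

Lemma le_trans X x y z : le_by (preservant X) x y -> le_by (preservant X) y z ->
  le_by (preservant X) x z.
Proof.
move=> [p [Hp Hxy]] [q [Hq Hyz]]; exists (p + q)%R; split.
  move=> a Ha; have [b [Hab Xb]] := Hp a Ha; have [c [Hbc Xc]] := Hq b Xb.
  by exists c; split=> // i; rewrite Hbc Hab ffunE addrA.
by move=> i; rewrite Hyz Hxy ffunE addrA.
Qed.

Lemma le_antisym X x y : X x -> le_by (preservant X) x y -> le_by (preservant X) y x -> x = y.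
Proof.
move=> Hx Hxy Hyx.
have [Ht _] : X y /\ True.
  by case: Hxy=> p [Hp Hs]; have [z [Hz Xz]] := Hp x Hx; rewrite (shift_uniq Hs Hz).
apply/ffunP=> i; apply/eqP; rewrite eqn_leq (le_pointwise Hx Hxy i) (le_pointwise Ht Hyx i) //.
Qed.

Lemma le_wf X : well_founded (fun a b => [/\ X a, X b, le_by (preservant X) a b & a <> b]).
Proof.
suff H : forall k (b : natvec n), \sum_i b i < k -> Acc (fun a b => [/\ X a, X b, le_by (preservant X) a b & a <> b]) b.
  by move=> b; apply: (H (\sum_i b i).+1).
elim=> [//|k IH] b Hb; constructor=> a [Xa Xb Hab Hne].
apply: IH; have := sum_lt (le_pointwise Xa Hab) Hne; lia.
Qed.

Lemma pres_ext X (q q' : natvec n) : (forall i, q i = q' i) -> preservant X (toint q) -> preservant X (toint q').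
Proof.
move=> E H x Hx; have [y [Hy Xy]] := H x Hx; exists y; split=> // i.
by rewrite Hy !ffunE E.
Qed.

Lemma pres0 X : preservant X (toint [ffun=> 0%N]).
Proof. by move=> x Hx; exists x; split=> // i; rewrite !ffunE addr0. Qed.

Lemma presD X (q1 q2 : natvec n) : preservant X (toint q1) -> preservant X (toint q2) ->
  preservant X (toint [ffun i => q1 i + q2 i]).
Proof.
move=> H1 H2 x Hx; have [y [Hy Xy]] := H1 x Hx; have [z [Hz Xz]] := H2 y Xy.
by exists z; split=> // i; rewrite Hz Hy !ffunE PoszD addrA.
Qed.

Lemma presM X k (q : natvec n) : preservant X (toint q) -> preservant X (toint [ffun i => k * q i]).
Proof.
move=> H; elim: k => [|k IH].
  by apply: (@pres_ext X [ffun=> 0%N]); last exact: pres0; move=> i; rewrite !ffunE.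
by apply: (pres_ext _ (presD H IH)); move=> i; rewrite !ffunE mulSn.
Qed.

Lemma sum0 (q : natvec n) : \sum_i q i = 0 -> forall i, q i = 0.
Proof. by move=> H i; move: H; rewrite (bigD1 i) //=; lia. Qed.

Lemma pres_equiv X Y p : (forall x, X x <-> Y x) -> preservant X p -> preservant Y p.
Proof.
move=> E H x /E Hx; have [y [Hy Xy]] := H x Hx; exists y; split=> //; exact/E.
Qed.

Lemma hyb_pres B F (e : 'I_(size F) -> nat) d0 :
  preservant (in_hybrid B F) (toint [ffun i => \sum_(l < size F) e l * (nth d0 F l) i]).
Proof.
move=> x [b Hb [c Hc]]; exists (addv x [ffun i => \sum_(l < size F) e l * (nth d0 F l) i]).
split; first exact: shift_addv.
exists b => //; exists (fun l => c l + e l) => i; rewrite !ffunE Hc -addnA; congr (_ + _).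
rewrite -big_split; apply: eq_bigr => l _ /=.
by rewrite mulnDl (set_nth_default b d0) // ltn_ord.
Qed.

End Aux.

Lemma exfilter (T : eqType) (P : T -> Prop) (l : seq T) :
  exists l' : seq T, forall x, x \in l' <-> x \in l /\ P x.
Proof.
elim: l => [|a l [l' Hl']]; first by exists [::] => x; split=> // [[]].
case: (classic (P a)) => Pa.
  exists (a :: l') => x; rewrite !inE; split.
    by case/orP=> [/eqP ->|/Hl' [H1 H2]]; [rewrite eqxx | rewrite H1 orbT].
  by case=> /orP [/eqP ->|H1] H2; [rewrite eqxx | rewrite (proj2 (Hl' x)) ?orbT].
exists l' => x; rewrite inE; split.
  by move/Hl' => [H1 H2]; rewrite H1 orbT.
case=> /orP [/eqP ->|H1] H2 //; exact/Hl'.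
Qed.
Definition incr (phi : nat -> nat) := forall k, phi k < phi k.+1.
Definition mono (f : nat -> nat) := forall a b, a <= b -> f a <= f b.

Lemma incr_lt phi : incr phi -> forall a b, a < b -> phi a < phi b.
Proof.
move=> H a b /subnKC <-; elim: (b - a.+1) => [|d IH]; first by rewrite addn0.
by rewrite addnS (ltn_trans IH).
Qed.

Lemma mono_step f : (forall k, f k <= f k.+1) -> mono f.
Proof.
move=> H a b /subnKC <-; elim: (b - a) => [|d IH]; first by rewrite addn0.
by rewrite addnS (leq_trans IH).
Qed.

Lemma incr_comp phi psi : incr phi -> incr psi -> incr (phi \o psi).
Proof. by move=> H1 H2 k; apply: (incr_lt H1); apply: H2. Qed.

Lemma mono_comp f psi : mono f -> incr psi -> mono (f \o psi).
Proof.
move=> Hf Hp a b Hab; apply: Hf; case: (ltngtP a b) Hab => // [lt _|-> //].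
exact: ltnW (incr_lt Hp lt).
Qed.

Lemma inf_sub (P : nat -> Prop) : (forall a, exists j, a < j /\ P j) ->
  exists phi, incr phi /\ forall k, P (phi k).
Proof.
move=> H.
pose sel a := proj1_sig (constructive_indefinite_description _ (H a)).
have Hsel a : a < sel a /\ P (sel a) by rewrite /sel; case: constructive_indefinite_description.
pose phi := fix phi k := if k is k'.+1 then sel (phi k') else sel 0.
exists phi; split; first by move=> k; case: (Hsel (phi k)).
by case=> [|k] /=; [case: (Hsel 0) | case: (Hsel (phi k))].
Qed.

Lemma min_ex (h : nat -> nat) (P : nat -> Prop) : (exists j, P j) ->
  exists j, P j /\ forall j', P j' -> h j <= h j'.
Proof.
case=> j0 Pj0; have [m Hm] : exists m, h j0 <= m by exists (h j0).
elim: m j0 Pj0 Hm => [|m IH] j0 Pj0 Hm.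
  by exists j0; split=> // j' _; move: Hm; rewrite leqn0 => /eqP ->.
case: (classic (exists j', P j' /\ h j' < h j0)) => [[j' [Pj' Hlt]]|Hn].
  by apply: (IH j') => //; rewrite -ltnS (leq_trans Hlt).
exists j0; split=> // j' Pj'; rewrite leqNgt; apply/negP=> Hlt; apply: Hn.
by exists j'.
Qed.

Lemma nat_sub (h : nat -> nat) : exists phi, incr phi /\ mono (h \o phi).
Proof.
have H a : exists j, a < j /\ forall j', a < j' -> h j <= h j'.
  have [j [Hj Hm]] := @min_ex h (fun j => a < j) (ex_intro _ a.+1 (ltnSn a)).
  by exists j.
pose sel a := proj1_sig (constructive_indefinite_description _ (H a)).
have Hsel a : a < sel a /\ forall j', a < j' -> h (sel a) <= h j'.
  by rewrite /sel; case: constructive_indefinite_description.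
pose phi := fix phi k := if k is k'.+1 then sel (phi k') else sel 0.
have Hi : incr phi by move=> k; case: (Hsel (phi k)).
exists phi; split=> //; apply: mono_step=> k /=.
case: k => [|k] /=.
  by case: (Hsel 0) => H0 Hm; apply: Hm; apply: ltn_trans H0 (Hi 0).
by case: (Hsel (phi k)) => H0 Hm; apply: Hm; apply: ltn_trans H0 (Hi k.+1).
Qed.

Lemma pigeon (T : eqType) (B : seq T) (b : nat -> T) : (forall k, b k \in B) ->
  exists v, forall a, exists j, a < j /\ b j = v.
Proof.
move=> HB; apply: NNPP=> Hn.
have Hv : forall v, exists a, forall j, a < j -> b j <> v.
  move=> v; apply: NNPP=> Hn2; apply: Hn; exists v=> a; apply: NNPP=> Hn3.
  apply: Hn2; exists a=> j Hj Hb; apply: Hn3; by exists j.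
have : exists A, forall v, v \in B -> forall j, A < j -> b j <> v.
  elim: B {HB} => [|v B [A HA]]; first by exists 0.
  have [a Ha] := Hv v; exists (maxn a A)=> w; rewrite inE => /orP [/eqP ->|wB] j Hj.
    by apply: Ha; apply: leq_ltn_trans Hj; apply: leq_maxl.
  by apply: HA => //; apply: leq_ltn_trans Hj; apply: leq_maxr.
case=> A HA; exact: (HA _ (HB A.+1) A.+1 (ltnSn A)).
Qed.

Lemma dickson_cs K (h : nat -> 'I_K -> nat) (cs : seq 'I_K) :
  exists phi, incr phi /\ forall i, i \in cs -> mono (fun k => h (phi k) i).
Proof.
elim: cs => [|i cs [phi [Hp Hm]]].
  by exists id; split=> // k.
have [psi [Hps Hm2]] := nat_sub (fun k => h (phi k) i).
exists (phi \o psi); split; first exact: incr_comp.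
move=> j; rewrite inE => /orP [/eqP ->|jc]; first exact: Hm2.
exact: (mono_comp (Hm j jc) Hps).
Qed.

Lemma dickson (T : eqType) (B : seq T) K (b : nat -> T) (c : nat -> 'I_K -> nat) :
  (forall k, b k \in B) ->
  exists j k, j < k /\ b j = b k /\ forall i, c j i <= c k i.
Proof.
move=> HB; have [v Hv] := pigeon HB.
have [phi [Hp Hb]] := inf_sub Hv.
have [psi [Hps Hm]] := dickson_cs (fun k => c (phi k)) (enum 'I_K).
exists (phi (psi 0)), (phi (psi 1)); split; first by apply: incr_lt => //; apply: Hps.
split; first by rewrite !Hb.
by move=> i; apply: (Hm i) => //; rewrite mem_enum.
Qed.

Lemma fwd_fin n (X : natset n) B F : (forall x, X x <-> in_hybrid B F x) ->
  forall S : natvec n -> Prop, (forall s, S s -> X s) ->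
  exists l : seq (natvec n), forall m, S m ->
    (forall s, S s -> le_by (preservant X) s m -> s = m) -> m \in l.
Proof.
move=> HX S HS; apply: NNPP => Hn.
have Hnx : forall l : seq (natvec n), exists m, (S m /\ (forall s, S s -> le_by (preservant X) s m -> s = m)) /\ m \notin l.
  move=> l; apply: NNPP=> H; apply: Hn; exists l=> m Sm Hm; apply: NNPP=> Hml; apply: H.
  by exists m; split=> //; apply/negP.
pose nxt l := proj1_sig (constructive_indefinite_description _ (Hnx l)).
have Hnxt l : (S (nxt l) /\ (forall s, S s -> le_by (preservant X) s (nxt l) -> s = nxt l)) /\ nxt l \notin l.
  by rewrite /nxt; case: constructive_indefinite_description.
pose L := fix L k := if k is k'.+1 then nxt (L k') :: L k' else [::].
pose g k := nxt (L k).
have HL : forall j k, j < k -> g j \in L k.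
  move=> j; elim=> [//|k IH] Hjk /=; rewrite inE.
  rewrite ltnS leq_eqVlt in Hjk; case/orP: Hjk => [/eqP ->|lt]; first by rewrite eqxx.
  by rewrite IH ?orbT.
have Hrep : forall k, exists bc : natvec n * ('I_(size F) -> nat), bc.1 \in B /\
    forall i, g k i = bc.1 i + \sum_(j < size F) bc.2 j * (nth bc.1 F j) i.
  move=> k; have := (proj1 (HX (g k)) (HS _ (proj1 (proj1 (Hnxt (L k)))))).
  by case=> b Hb [c Hc]; exists (b, c).
pose bc k := proj1_sig (constructive_indefinite_description _ (Hrep k)).
have Hbc k : (bc k).1 \in B /\ forall i, g k i = (bc k).1 i + \sum_(j < size F) (bc k).2 j * (nth (bc k).1 F j) i.
  by rewrite /bc; case: constructive_indefinite_description.
have [j [k [Hjk [Eb Hc]]]] := @dickson _ B _ (fun k => (bc k).1) (fun k => (bc k).2) (fun k => proj1 (Hbc k)).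
pose d := [ffun i => \sum_(l < size F) ((bc k).2 l - (bc j).2 l) * (nth (bc k).1 F l) i].
have Hd : preservant X (toint d).
  have H := @hyb_pres n B F (fun l => (bc k).2 l - (bc j).2 l) (bc k).1.
  exact: (pres_equiv (fun x => iff_sym (HX x)) H).
have Hgk : g k = addv (g j) d.
  apply/ffunP=> i; rewrite !ffunE (proj2 (Hbc k)) (proj2 (Hbc j)) /= Eb -addnA; congr (_ + _).
  rewrite -big_split; apply: eq_bigr => l _ /=; rewrite -mulnDl subnKC //.
have Hle : le_by (preservant X) (g j) (g k).
  by exists (toint d); split=> //; rewrite Hgk; apply: shift_addv.
have Heq := (proj2 (proj1 (Hnxt (L k)))) (g j) (proj1 (proj1 (Hnxt (L j)))) Hle.
by move: (proj2 (Hnxt (L k))); rewrite -Heq HL.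
Qed.

Lemma bwd n (X : natset n) :
  well_founded (fun a b => [/\ X a, X b, le_by (preservant X) a b & a <> b]) ->
  (forall S : natvec n -> Prop, (forall s, S s -> X s) ->
         exists l : seq (natvec n), forall m, S m ->
           (forall s, S s -> le_by (preservant X) s m -> s = m) -> m \in l) ->
  hybridlinear X.
Proof.
move=> Hwf Hfin.
case: (classic (exists x0, X x0)) => [[x0 X0]|Hno]; last first.
  exists [::], [::] => x; split=> [Hx|[b]]; [by case: Hno; exists x | by rewrite in_nil].
have Hmin : forall x, X x -> exists m, [/\ X m, (forall s, X s -> le_by (preservant X) s m -> s = m) & le_by (preservant X) m x].
  apply: (well_founded_ind Hwf (fun x => X x -> _)) => x IH Hx.
  case: (classic (forall s, X s -> le_by (preservant X) s x -> s = x)) => Hm.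
    by exists x; split=> //; exact: le_refl.
  have [s [Xs Hsx Hne]] : exists s, [/\ X s, le_by (preservant X) s x & s <> x].
    apply: NNPP=> H; apply: Hm=> s Xs Hsx; apply: NNPP=> Hne; apply: H; by exists s.
  have [m [Xm Hmm Hms]] := IH s (And4 Xs Hx Hsx Hne) Xs.
  by exists m; split=> //; exact: le_trans Hms Hsx.
pose S m := exists q : natvec n, [/\ preservant X (toint q), 0 < \sum_i q i & m = addv x0 q].
have HS : forall s, S s -> X s by move=> s [q [Hq _ ->]]; exact: pres_addv.
have [l Hl] := Hfin S HS.
have [F HF] := exfilter (fun f : natvec n => preservant X (toint f)) [seq ([ffun i => m i - x0 i] : natvec n) | m : natvec n <- l].
have HFp : forall f, f \in F -> preservant X (toint f) by move=> f /HF [].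
have HA : forall (d0 : natvec n) k (q : natvec n), \sum_i q i < k -> preservant X (toint q) ->
    exists c : 'I_(size F) -> nat, forall i, q i = \sum_(j < size F) c j * (nth d0 F j) i.
  move=> d0; elim=> [//|k IH] q Hk Hq.
  case: (posnP (\sum_i q i)) => Hs.
    by exists (fun _ => 0) => i; rewrite (sum0 Hs) big1.
  have Sm : S (addv x0 q) by exists q.
  case: (classic (forall s, S s -> le_by (preservant X) s (addv x0 q) -> s = addv x0 q)) => Hm.
    have Hml := Hl _ Sm Hm.
    have Hq' : [ffun i => addv x0 q i - x0 i] = q by apply/ffunP=> i; rewrite !ffunE addKn.
    have qF : q \in F.
      apply/HF; split=> //; rewrite -Hq'.
      exact: (map_f (fun m : natvec n => [ffun i => m i - x0 i]) Hml).
    have Hidx : index q F < size F by rewrite index_mem.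
    exists (fun j => nat_of_bool (j == Ordinal Hidx)) => i.
    rewrite (bigD1 (Ordinal Hidx)) //= eqxx mul1n big1 ?addn0 ?(nth_index d0 qF) //.
    by move=> j /negbTE ->.
  have [s [Ss Hsm Hne]] : exists s, [/\ S s, le_by (preservant X) s (addv x0 q) & s <> addv x0 q].
    apply: NNPP=> H; apply: Hm=> s Ss Hsm; apply: NNPP=> Hne; apply: H; by exists s.
  case: Ss => q1 [Hq1 Hs1 Es]; subst s.
  case: Hsm => p2 [Hp2 Hsh].
  have Xs : X (addv x0 q1) := pres_addv Hq1 X0.
  have Hnn := pres_nonneg Hp2 Xs.
  have Ep2 : toint (tonat p2) = p2 := tonatK Hnn.
  have Hq2 : preservant X (toint (tonat p2)) by rewrite Ep2.
  have Eq : forall i, q i = q1 i + tonat p2 i.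
    move=> i; have := Hsh i; rewrite -{1}Ep2 !ffunE -PoszD; case=> H.
    by move/eqP: H; rewrite -addnA eqn_add2l => /eqP.
  have Hs2 : 0 < \sum_i tonat p2 i.
    rewrite lt0n; apply/negP => /eqP H0; apply: Hne; apply/ffunP => i.
    by rewrite !ffunE Eq (sum0 H0) addn0.
  have Esum : \sum_i q i = \sum_i q1 i + \sum_i tonat p2 i.
    by rewrite -big_split; apply: eq_bigr => i _; rewrite Eq.
  have [c1 Hc1] := IH q1 ltac:(lia) Hq1.
  have [c2 Hc2] := IH (tonat p2) ltac:(lia) Hq2.
  exists (fun j => c1 j + c2 j) => i; rewrite Eq Hc1 Hc2 -big_split.
  by apply: eq_bigr => j _; rewrite mulnDl.
have [l0 Hl0] := Hfin X (fun s Hs => Hs).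
have [B HB] := exfilter X l0.
exists B, F => x; split.
  move=> Hx; have [m [Xm Hmm [p [Hp Hsh]]]] := Hmin x Hx.
  have mB : m \in B by apply/HB; split=> //; apply: Hl0.
  have Hnn := pres_nonneg Hp Xm.
  have Hq : preservant X (toint (tonat p)) by rewrite tonatK.
  have [c Hc] := HA m _ (tonat p) (ltnSn _) Hq.
  have Ep : forall j, p j = ((tonat p j)%:Z)%R by move=> j; rewrite -{1}(tonatK Hnn) ffunE.
  exists m => //; exists c => i; rewrite -Hc; have := Hsh i; rewrite Ep -PoszD; by case.
case=> b bB [c Hc].
have Xb : X b by case/HB: bB.
have Hr : forall r : seq 'I_(size F), preservant X (toint [ffun i => \sum_(j <- r) c j * (nth b F j) i]).
  elim=> [|j r IHr].
    by apply: (@pres_ext _ X [ffun=> 0%N]); last exact: pres0; move=> i; rewrite !ffunE big_nil.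
  apply: (pres_ext _ (presD (presM (c j) (HFp _ (mem_nth b (ltn_ord j)))) IHr)).
  by move=> i; rewrite !ffunE big_cons.
have := pres_addv (Hr (index_enum _)) Xb.
suff -> : addv b [ffun i => \sum_(j <- index_enum 'I_(size F)) c j * (nth b F j) i] = x by [].
by apply/ffunP=> i; rewrite !ffunE Hc.
Qed.

Theorem mainTheorem14 (n : nat) (X : natset n) :
  hybridlinear X <-> wqo_on X (le_by (preservant X)).
Proof.
split.
  case=> B [F HX]; split.
  - move=> x _; exact: le_refl.
  - move=> x y z _ _ _; exact: le_trans.
  - move=> x y Hx _; exact: le_antisym.
  - exact: le_wf.
  - exact: fwd_fin HX.
by case=> _ _ _ Hwf Hfin; apply: bwd.
Qed.
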